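(* Let $B$ be a connected building set on $V=[n]$. Then $$F(P_B)=\sum_{\alpha\models n}\zeta_\alpha(B)M_\alpha,$$ where $\zeta_\alpha(B)$ is the number of splitting chains of $B$ of type $\alpha$.
   Context: A building set on a finite set $V$ is a collection $B$ of nonempty subsets of $V$ such that $\{v\}\in B$ for all $v\in V$ and such that $I,J\in B$, $I\cap J\neq\emptyset$ imply $I\cup J\in B$. It is connected if $V\in B$, and discrete if it consists only of the singletons. For $I\subseteq V$, the restriction is $B|_I=\{J\in B: J\subseteq I\}$ (a building set on $I$) and the contraction is $B/I=\{J\subseteq V\setminus I: J\neq\emptyset,\ J\in B\text{ or }J\cup I'\in B\text{ for some }I'\subseteq I\}$ (a building set on $V\setminus I$). The nestohedron of $B$ is the Minkowski sum $P_B=\sum_{I\in B}\mathrm{Conv}\{e_i: i\in I\}\subset\mathbb{R}^V$. For a convex polytope $Q\subset\mathbb{R}^V$, a function $f:V\to\mathbb{N}=\{1,2,\dots\}$ is $Q$-generic if the linear functional $x\mapsto\sum_{v\in V}f(v)x_v$ attains its maximum over $Q$ at a unique point. Set $F(Q)=\sum_{f\ Q\text{-generic}}\prod_{v\in V}x_{f(v)}$, a formal power series in commuting variables $x_1,x_2,\dots$. For a composition $\alpha=(a_1,\dots,a_k)$ of $n$ (written $\alpha\models n$; $k(\alpha)=k$ is its length), $M_\alpha=\sum_{i_1<\dots<i_k}x_{i_1}^{a_1}\cdots x_{i_k}^{a_k}$ is the monomial quasisymmetric function, with $M_{()}=1$. A splitting chain of $B$ of type $\alpha=(a_1,\dots,a_k)\models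 n$ is a chain $\emptyset=I_0\subsetneq I_1\subsetneq\cdots\subsetneq I_k=V$ such that for every $1\le j\le k$ the building set $(B|_{I_j})/I_{j-1}$ (on $I_j\setminus I_{j-1}$) is discrete and $|I_j\setminus I_{j-1}|=a_j$. *)

(* Defs.v *)
From HB Require Import structures.
From mathcomp Require Import all_boot all_order all_algebra.
From Stdlib Require Import ClassicalEpsilon.
Set Implicit Arguments. Unset Strict Implicit. Unset Printing Implicit Defensive.
Import Order.TTheory GRing.Theory Num.Theory.

Definition pbool (P : Prop) : bool :=
  if excluded_middle_informative P then true else false.

Section Building.
Variable n : nat.
Implicit Types (B C : {set {set 'I_n}}) (I J W : {set 'I_n}).

Definition building_set B : Prop :=
  [/\ set0 \notin B,
      (forall v : 'I_n, [set v] \in B) &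
      (forall I J, I \in B -> J \in B -> I :&: J != set0 -> I :|: J \in B)].

Definition connected_bs B : Prop := [set: 'I_n] \in B.

Definition discrete_on W C : bool := C == [set [set w] | w in W].

Definition restrict B I : {set {set 'I_n}} := [set J in B | J \subset I].

(* contraction C/I, where C is a building set on the ground set W
   (so C/I is a building set on W \ I) *)
Definition contract W C I : {set {set 'I_n}} :=
  [set J : {set 'I_n} | [&& J != set0, J \subset W :\: I &
     (J \in C) || [exists I' : {set 'I_n}, (I' \subset I) && (J :|: I' \in C)]]].

Definition splitting_chain B (alpha : seq nat) (c : (size alpha).+1.-tuple {set 'I_n}) : bool :=
  let I j := nth set0 c j in
  [&& I 0 == set0, I (size alpha) == [set: 'I_n] &
    all (fun j =>
      [&& I j \proper I j.+1,
          #|I j.+1 :\: I j| == nth 0 alpha j &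
          discrete_on (I j.+1 :\: I j) (contract (I j.+1) (restrict B (I j.+1)) (I j))])
      (iota 0 (size alpha))].

Arguments splitting_chain B alpha c : clear implicits.

Definition zeta B (alpha : seq nat) : nat :=
  #|[set c : (size alpha).+1.-tuple {set 'I_n} | splitting_chain B alpha c]|.

End Building.

Definition is_composition (m : nat) (alpha : seq nat) : bool :=
  all (fun a => 0 < a) alpha && (sumn alpha == m).

Fixpoint seqs_upto (k : nat) (xs : seq nat) : seq (seq nat) :=
  match k with
  | 0 => [:: [::]]
  | k'.+1 => [::] :: [seq x :: s | x <- xs, s <- seqs_upto k' xs]
  end.

Definition compositions (m : nat) : seq (seq nat) :=
  undup [seq a <- seqs_upto m (iota 1 m) | is_composition m a].

(* A series is given by its coefficients: a monomial x_1^{s_0} x_2^{s_1} ...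
   x_k^{s_(k-1)} is encoded by the exponent list s (trailing zeros allowed). *)
Definition qseries := seq nat -> nat.

Definition qsum (I : Type) (r : seq I) (c : I -> nat) (G : I -> qseries) : qseries :=
  fun s => \sum_(i <- r) c i * G i s.

(* monomial quasisymmetric function M_alpha: coefficient of x^s is 1 iff the
   nonzero exponents of s, read in increasing variable order, form alpha *)
Definition Mqsym (alpha : seq nat) : qseries :=
  fun s => [seq e <- s | e != 0] == alpha.

Section Polytopes.
Variables (R : realFieldType) (n : nat).
Local Open Scope ring_scope.

Definition vpoint := 'rV[R]_n.

Definition basisvec (i : 'I_n) : vpoint := delta_mx 0 i.

Definition in_conv (I : {set 'I_n}) (p : 'I_n -> vpoint) (x : vpoint) : Prop :=
  exists lam : 'I_n -> R,
    [/\ forall i, 0 <= lam i, \sum_(i in I) lam i = 1 &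
        x = \sum_(i in I) lam i *: p i].

Definition nestohedron (B : {set {set 'I_n}}) (x : vpoint) : Prop :=
  exists y : {set 'I_n} -> vpoint,
    (forall I, I \in B -> in_conv I basisvec (y I)) /\ x = \sum_(I in B) y I.

Definition pairing (f : 'I_n -> nat) (x : vpoint) : R :=
  \sum_(v < n) (f v)%:R * x 0 v.

Definition generic (Q : vpoint -> Prop) (f : 'I_n -> nat) : Prop :=
  exists x, [/\ Q x, (forall y, Q y -> pairing f y <= pairing f x) &
                     (forall y, Q y -> pairing f y = pairing f x -> y = x)].

(* F(Q) = sum_{f : V -> {1,2,...} Q-generic} prod_v x_{f(v)}.
   Coefficient of x^s: number of Q-generic f with |f^{-1}(i+1)| = s_i for all i.
   Such f take values in {1,...,size s}; g below is f - 1. *)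
Definition Fser (Q : vpoint -> Prop) : qseries :=
  fun s => #|[set g : {ffun 'I_n -> 'I_(size s)} |
               pbool (generic Q (fun v => (g v).+1)) &&
               [forall i : 'I_(size s), #|[set v | g v == i]| == nth 0 s i]]|.

End Polytopes.

(* Main.v *)
Require Import Defs.
From HB Require Import structures.
From mathcomp Require Import all_boot all_order all_algebra.
From Stdlib Require Import ClassicalEpsilon FunctionalExtensionality.
Set Implicit Arguments. Unset Strict Implicit. Unset Printing Implicit Defensive.
Import Order.TTheory GRing.Theory Num.Theory.

Definition cnt (s : seq nat) (i : nat) : nat := count (fun e => e != 0) (take i s).

Lemma cnt_cons e s i : cnt (e :: s) i.+1 = (e != 0) + cnt s i.
Proof. by []. Qed.

Lemma cnt_mono s i j : i <= j -> cnt s i <= cnt s j.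
Proof.
move=> hij; rewrite /cnt -(take_takel s hij).
by rewrite -{2}(cat_take_drop i (take j s)) count_cat leq_addr.
Qed.

Lemma cnt_S s i : i < size s -> cnt s i.+1 = cnt s i + (nth 0 s i != 0).
Proof. by move=> hi; rewrite /cnt (take_nth 0 hi) -cats1 count_cat /= addn0. Qed.

Lemma cnt_lt s i j : i < j -> i < size s -> nth 0 s i != 0 -> cnt s i < cnt s j.
Proof.
move=> hij hi hnz; apply: (@leq_trans (cnt s i.+1)); last exact: cnt_mono.
by rewrite cnt_S // hnz addn1.
Qed.

Lemma cnt_size s : cnt s (size s) = size [seq e <- s | e != 0].
Proof. by rewrite /cnt take_size size_filter. Qed.

Lemma cnt_inj s i j : i < size s -> j < size s -> nth 0 s i != 0 -> nth 0 s j != 0 ->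
  cnt s i = cnt s j -> i = j.
Proof.
move=> hi hj ni nj he; case: (ltngtP i j) => // h.
  by have := cnt_lt h hi ni; rewrite he ltnn.
by have := cnt_lt h hj nj; rewrite he ltnn.
Qed.

Lemma cnt_ltk s i : i < size s -> nth 0 s i != 0 -> cnt s i < size [seq e <- s | e != 0].
Proof. by move=> hi hn; rewrite -cnt_size; apply: cnt_lt. Qed.

Lemma nth_filter_cnt s i : i < size s -> nth 0 s i != 0 ->
  nth 0 [seq e <- s | e != 0] (cnt s i) = nth 0 s i.
Proof.
elim: s i => [|e s IH] [|i] //=.
  by move=> _ ->.
move=> hi hn; rewrite cnt_cons; case: (e != 0) => /=; first by rewrite IH.
by rewrite add0n IH.
Qed.

Lemma pos_ex s j : j < size [seq e <- s | e != 0] ->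
  exists i, (i < size s) && (nth 0 s i != 0) && (cnt s i == j).
Proof.
elim: s j => [|e s IH] j //=.
case he: (e != 0) => /=.
  case: j => [|j] /=; first by move=> _; exists 0; rewrite /= he.
  move=> /IH [i /andP[/andP[h1 h2] h3]]; exists i.+1.
  by rewrite ltnS h1 /= h2 cnt_cons he (eqP h3) /=; apply/eqP; exact: add1n.
move=> /IH [i /andP[/andP[h1 h2] h3]]; exists i.+1.
by rewrite ltnS h1 /= h2 cnt_cons he (eqP h3) /=; apply/eqP; exact: add0n.
Qed.

Definition goodN n (B : {set {set 'I_n}}) (f : 'I_n -> nat) : Prop :=
  forall K a b, K \in B -> a \in K -> b \in K ->
    (forall c, c \in K -> f c <= f a) -> (forall c, c \in K -> f c <= f b) -> a = b.

Section Geo.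
Variables (R : realFieldType) (n : nat).
Implicit Types (f : 'I_n -> nat) (I : {set 'I_n}).
Local Open Scope ring_scope.

Lemma pairingD f (x y : vpoint R n) : pairing f (x + y) = pairing f x + pairing f y.
Proof. by rewrite /pairing -big_split; apply: eq_bigr => v _; rewrite mxE mulrDr. Qed.

Lemma pairing0 f : pairing f (0 : vpoint R n) = 0.
Proof. by rewrite /pairing big1 // => v _; rewrite mxE mulr0. Qed.

Lemma pairing_sum f (I : Type) (r : seq I) (P : pred I) (F : I -> vpoint R n) :
  pairing f (\sum_(i <- r | P i) F i) = \sum_(i <- r | P i) pairing f (F i).
Proof. exact: (big_morph _ (pairingD f) (pairing0 f)). Qed.

Lemma pairingZ f a (x : vpoint R n) : pairing f (a *: x) = a * pairing f x.
Proof. by rewrite /pairing mulr_sumr; apply: eq_bigr => v _; rewrite mxE mulrCA. Qed.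

Lemma pairing_e f i : pairing f (basisvec R i) = (f i)%:R.
Proof.
rewrite /pairing (bigD1 i) //= big1 ?addr0 => [|v hv]; first by rewrite mxE !eqxx mulr1.
by rewrite mxE (negbTE hv) andbF mulr0.
Qed.

Lemma conv_bound f I (y : vpoint R n) a : in_conv I (@basisvec R n) y -> a \in I ->
  (forall c, c \in I -> (f c <= f a)%N) -> pairing f y <= (f a)%:R.
Proof.
move=> [lam [H0 H1 ->]] Ha Hm; rewrite pairing_sum.
under eq_bigr do rewrite pairingZ pairing_e.
have <- : \sum_(i in I) lam i * (f a)%:R = (f a)%:R by rewrite -mulr_suml H1 mul1r.
apply: ler_sum => i Hi.
by apply: ler_wpM2l => //; rewrite ler_nat Hm.
Qed.

Lemma conv_eq f I (y : vpoint R n) a : in_conv I (@basisvec R n) y -> a \in I ->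
  (forall c, c \in I -> (f c <= f a)%N) -> (forall c, c \in I -> f c = f a -> c = a) ->
  pairing f y = (f a)%:R -> y = basisvec R a.
Proof.
move=> [lam [H0 H1 ->]] Ha Hm Hu.
rewrite pairing_sum; under eq_bigr do rewrite pairingZ pairing_e.
move=> Hp.
have Hz : \sum_(i in I) lam i * ((f a)%:R - (f i)%:R) = 0.
  under eq_bigr do rewrite mulrBr.
  by rewrite sumrB -mulr_suml H1 mul1r Hp subrr.
have Hl : forall i, i \in I -> i != a -> lam i = 0.
  move=> i Hi Hia.
  have Hnn : forall i, i \in I -> 0 <= lam i * ((f a)%:R - (f i)%:R).
    by move=> j Hj; rewrite mulr_ge0 // subr_ge0 ler_nat Hm.
  move: (psumr_eq0P Hnn Hz Hi) => /eqP; rewrite mulf_eq0 => /orP[/eqP //|].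
  rewrite subr_eq0 eqr_nat => /eqP Hf.
  by have := Hu i Hi (esym Hf); move/eqP: Hia.
have Hla : lam a = 1.
  rewrite (bigD1 a) //= big1 ?addr0 in H1 => // i /andP[Hi Hia].
  exact: Hl.
rewrite (bigD1 a) //= big1 ?addr0 => [|i /andP[Hi Hia]]; last by rewrite Hl // scale0r.
by rewrite Hla scale1r.
Qed.

Lemma conv_e I a : a \in I -> in_conv I (@basisvec R n) (basisvec R a).
Proof.
move=> Ha; exists (fun i => (i == a)%:R); split.
- by move=> i; rewrite ler0n.
- by rewrite (bigD1 a) //= eqxx big1 ?addr0 // => i /andP[_ /negbTE->].
- rewrite [RHS](bigD1 a) //= eqxx scale1r big1 ?addr0 // => i /andP[_ /negbTE->].
  by rewrite scale0r.
Qed.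

Lemma nesto_upper f (B : {set {set 'I_n}}) (m0 : {set 'I_n} -> 'I_n) (x : vpoint R n) :
  (forall I, I \in B -> m0 I \in I /\ forall c, c \in I -> (f c <= f (m0 I))%N) ->
  nestohedron B x -> pairing f x <= \sum_(I in B) (f (m0 I))%:R.
Proof.
move=> Hm [y [Hy ->]]; rewrite pairing_sum; apply: ler_sum => I HI.
by have [h1 h2] := Hm I HI; apply: conv_bound h1 h2; apply: Hy.
Qed.

Lemma nesto_pt (B : {set {set 'I_n}}) (m0 : {set 'I_n} -> 'I_n) :
  (forall I, I \in B -> m0 I \in I) ->
  nestohedron B (\sum_(I in B) basisvec R (m0 I)).
Proof. by move=> Hm; exists (fun I => basisvec R (m0 I)); split => // I HI; apply: conv_e; apply: Hm. Qed.

Lemma pairing_pt f (B : {set {set 'I_n}}) (m0 : {set 'I_n} -> 'I_n) :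
  pairing f (\sum_(I in B) basisvec R (m0 I)) = \sum_(I in B) (f (m0 I))%:R.
Proof. by rewrite pairing_sum; apply: eq_bigr => I _; rewrite pairing_e. Qed.

Lemma exists_max f I : I != set0 -> exists a, a \in I /\ forall c, c \in I -> (f c <= f a)%N.
Proof.
case/set0Pn => a0 Ha0; case: (arg_maxnP f Ha0) => a Ha Hm.
by exists a; split => // c Hc; apply: Hm.
Qed.

Definition mchoice f (d : 'I_n) (I : {set 'I_n}) : 'I_n :=
  odflt d [pick a in I | [forall c in I, (f c <= f a)%N]].

Lemma mchoiceP f d I : I != set0 ->
  mchoice f d I \in I /\ forall c, c \in I -> (f c <= f (mchoice f d I))%N.
Proof.
move=> HI; rewrite /mchoice; case: pickP => [a /andP[Ha /forall_inP Hm]|Hn] /=.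
  by split => // c Hc; apply: Hm.
have [a [Ha Hm]] := exists_max f HI.
by have := Hn a; rewrite Ha /=; move/negP; case; apply/forall_inP.
Qed.


Lemma generic_good (B : {set {set 'I_n}}) f : set0 \notin B ->
  generic (nestohedron (R := R) B) f -> goodN B f.
Proof.
move=> H0 [x [Hx Hmax Huniq]] K a b HK Ha Hb HmA HmB.
pose m0 := mchoice f a.
pose m1 I := if I == K then a else m0 I.
pose m2 I := if I == K then b else m0 I.
have HIne : forall I, I \in B -> I != set0 by move=> I HI; apply: contraNneq H0 => <-.
have Hm1 : forall I, I \in B -> m1 I \in I /\ forall c, c \in I -> (f c <= f (m1 I))%N.
  move=> I HI; rewrite /m1; case: eqP => [->|_]; first by split.
  exact: mchoiceP (HIne I HI).
have Hm2 : forall I, I \in B -> m2 I \in I /\ forall c, c \in I -> (f c <= f (m2 I))%N.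
  move=> I HI; rewrite /m2; case: eqP => [->|_]; first by split.
  exact: mchoiceP (HIne I HI).
have Hx1 : \sum_(I in B) basisvec R (m1 I) = x.
  have Hn : nestohedron B (\sum_(I in B) basisvec R (m1 I)).
    by apply: nesto_pt => I HI; case: (Hm1 I HI).
  apply: Huniq => //; apply/le_anti; rewrite Hmax //=.
  by rewrite pairing_pt; apply: nesto_upper.
have Hx2 : \sum_(I in B) basisvec R (m2 I) = x.
  have Hn : nestohedron B (\sum_(I in B) basisvec R (m2 I)).
    by apply: nesto_pt => I HI; case: (Hm2 I HI).
  apply: Huniq => //; apply/le_anti; rewrite Hmax //=.
  by rewrite pairing_pt; apply: nesto_upper.
have He : basisvec R a = basisvec R b.
  move: Hx1; rewrite -Hx2 (bigD1 K) //= [in RHS](bigD1 K) //= /m1 /m2 eqxx.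
  have -> : \sum_(I in B | I != K) basisvec R (if I == K then a else m0 I) =
            \sum_(I in B | I != K) basisvec R (if I == K then b else m0 I).
    by apply: eq_bigr => I /andP[_ /negbTE ->].
  by move/addIr.
move: (congr1 (fun M : vpoint R n => M 0 a) He); rewrite /basisvec !mxE !eqxx /=.
by case: eqP => // _ /eqP; rewrite oner_eq0.
Qed.

Lemma good_generic (B : {set {set 'I_n}}) f : set0 \notin B ->
  goodN B f -> generic (nestohedron (R := R) B) f.
Proof.
move=> H0 Hg.
have HIne : forall I, I \in B -> I != set0 by move=> I HI; apply: contraNneq H0 => <-.
case: (set_0Vmem B) => [->|[K HK]].
  exists 0; split.
  - by exists (fun _ => 0); split => [I|]; rewrite ?inE ?big_set0.
  - by move=> y [yI [_ ->]]; rewrite big_set0.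
  - by move=> y [yI [_ ->]]; rewrite big_set0.
have [d _] : exists d, d \in K by apply/set0Pn; apply: HIne.
pose m0 := mchoice f d.
have Hm : forall I, I \in B -> m0 I \in I /\ forall c, c \in I -> (f c <= f (m0 I))%N.
  by move=> I HI; apply: mchoiceP (HIne I HI).
exists (\sum_(I in B) basisvec R (m0 I)); split.
- by apply: nesto_pt => I HI; case: (Hm I HI).
- by move=> y Hy; rewrite pairing_pt; apply: nesto_upper.
- move=> y [yI [HyI Hy]] Hp; rewrite Hy; apply: eq_bigr => I HI.
  have Hz : \sum_(I in B) ((f (m0 I))%:R - pairing f (yI I)) = 0.
    by rewrite sumrB -pairing_pt -pairing_sum -Hy Hp subrr.
  have Hnn : forall I, I \in B -> 0 <= (f (m0 I))%:R - pairing f (yI I).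
    move=> J HJ; rewrite subr_ge0; case: (Hm J HJ) => h1 h2.
    exact: conv_bound (HyI J HJ) h1 h2.
  have := psumr_eq0P Hnn Hz HI; move/eqP; rewrite subr_eq0 => /eqP Hpe.
  case: (Hm I HI) => h1 h2.
  apply: (conv_eq (HyI I HI) h1 h2 _ (esym Hpe)) => c Hc Hfc.
  apply: (Hg I c (m0 I) HI Hc h1 _ h2) => c' Hc'; rewrite Hfc; exact: h2.
Qed.
End Geo.

Definition Wset n (rho : 'I_n -> nat) (j : nat) : {set 'I_n} := [set v | rho v < j].

Lemma good_mono n (B : {set {set 'I_n}}) (f1 f2 : 'I_n -> nat) :
  (forall a b, (f1 a <= f1 b) = (f2 a <= f2 b)) -> goodN B f1 -> goodN B f2.
Proof. by move=> H Hg K a b HK Ha Hb HA HB; apply: (Hg K a b) => // c Hc; rewrite H; auto. Qed.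

Lemma discrete_good n (B : {set {set 'I_n}}) (rho : 'I_n -> nat) k :
  (forall v, [set v] \in B) -> (forall v, rho v < k) ->
  (forall j, j < k -> discrete_on (Wset rho j.+1 :\: Wset rho j)
       (contract (Wset rho j.+1) (restrict B (Wset rho j.+1)) (Wset rho j))) <-> goodN B rho.
Proof.
move=> Hs Hk; split.
- move=> Hd K a b HK Ha Hb HA HB.
  have Hab : rho a = rho b by apply/eqP; rewrite eqn_leq HA ?HB.
  pose j := rho a.
  pose J := [set c in K | rho c == j].
  have HJ : J \in contract (Wset rho j.+1) (restrict B (Wset rho j.+1)) (Wset rho j).
    rewrite inE; apply/and3P; split.
    + by apply/set0Pn; exists a; rewrite inE Ha eqxx.
    + by apply/subsetP => c; rewrite !inE => /andP[_ /eqP ->]; rewrite ltnn ltnSn.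
    + apply/orP; right; apply/existsP; exists [set c in K | rho c < j].
      apply/andP; split.
      * by apply/subsetP => c; rewrite !inE => /andP[_ ->].
      * have -> : J :|: [set c in K | rho c < j] = K.
          apply/setP => c; rewrite !inE; case Hc: (c \in K) => //=.
          by have := HA c Hc; rewrite leq_eqVlt.
        rewrite inE HK /=; apply/subsetP => c Hc; rewrite inE ltnS; exact: HA.
  move: (Hd j (Hk a)) => /eqP HC; rewrite HC in HJ; case/imsetP: HJ => w _ HJw.
  have : a \in J by rewrite inE Ha eqxx.
  have : b \in J by rewrite inE Hb -Hab eqxx.
  by rewrite HJw !inE => /eqP -> /eqP ->.
- move=> Hg j Hj; apply/eqP/setP => J; rewrite inE.
  apply/idP/imsetP.
  + case/and3P => HJ0 HJD HJC.
    have [K [HK HKW HJK HKJ]] : exists K, [/\ K \in B, K \subset Wset rho j.+1,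
        J \subset K & K \subset J :|: Wset rho j].
      case/orP: HJC => [|/existsP [I' /andP[HI' HK]]].
      * rewrite inE => /andP[HB HW]; exists J; split => //; exact: subsetUl.
      * move: HK; rewrite inE => /andP[HB HW]; exists (J :|: I'); split => //.
          exact: subsetUl.
        exact: setUS.
    case/set0Pn: HJ0 => w Hw.
    have Hjv : forall c, c \in J -> rho c = j.
      move=> c Hc; have := subsetP HJD c Hc; rewrite !inE ltnS -leqNgt => /andP[h1 h2].
      by apply/eqP; rewrite eqn_leq h1 h2.
    have Hmax : forall c, c \in K -> rho c <= j.
      by move=> c Hc; have := subsetP HKW c Hc; rewrite inE ltnS.
    exists w; first exact: (subsetP HJD w Hw).
    apply/setP => c; rewrite in_set1; apply/idP/eqP => [Hc|->//].
    apply: (Hg K c w HK (subsetP HJK c Hc) (subsetP HJK w Hw)) => c' Hc';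
      rewrite ?(Hjv c Hc) ?(Hjv w Hw); exact: Hmax.
  + case => w Hw ->; apply/and3P; split.
    * by apply/set0Pn; exists w; exact: set11.
    * by rewrite sub1set.
    * apply/orP; left; rewrite inE Hs sub1set /=.
      by move: Hw; rewrite !inE => /andP[].
Qed.

Lemma pboolP (P : Prop) : reflect P (pbool P).
Proof. by rewrite /pbool; case: excluded_middle_informative => h; constructor. Qed.

Lemma chain_mono n (c : seq {set 'I_n}) k :
  (forall j, j < k -> nth set0 c j \subset nth set0 c j.+1) ->
  forall i j, i <= j -> j <= k -> nth set0 c i \subset nth set0 c j.
Proof.
move=> H i j; elim: j => [|j IH].
  by rewrite leqn0 => /eqP -> _.
rewrite leq_eqVlt => /orP[/eqP -> //|hij] hjk.
rewrite ltnS in hij.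
exact: subset_trans (IH hij (ltnW hjk)) (H j hjk).
Qed.

Section Count.
Variables (n : nat) (B : {set {set 'I_n}}) (s : seq nat).
Hypothesis HB : building_set B.

Local Notation alpha := [seq e <- s | e != 0].
Local Notation k := (size [seq e <- s | e != 0]).

Definition fib (g : {ffun 'I_n -> 'I_(size s)}) : bool :=
  [forall i : 'I_(size s), #|[set v | g v == i]| == nth 0 s i].

Definition rr (g : {ffun 'I_n -> 'I_(size s)}) (v : 'I_n) : nat := cnt s (g v).

Definition phi (g : {ffun 'I_n -> 'I_(size s)}) : k.+1.-tuple {set 'I_n} :=
  @Tuple k.+1 _ (mkseq (fun j => Wset (rr g) j) k.+1) (introT eqP (size_mkseq _ _)).

Lemma nth_phi g j : j <= k -> nth set0 (phi g) j = Wset (rr g) j.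
Proof. by move=> hj; rewrite /= nth_mkseq. Qed.

Lemma fib_nz g v : fib g -> nth 0 s (g v) != 0.
Proof.
move=> /forallP /(_ (g v)) /eqP <-.
by rewrite -lt0n card_gt0; apply/set0Pn; exists v; rewrite inE.
Qed.

Lemma rr_lt g v : fib g -> rr g v < k.
Proof. by move=> Hf; apply: cnt_ltk (ltn_ord _) (fib_nz v Hf). Qed.

Lemma rr_mono g a b : fib g -> (rr g a <= rr g b) = (g a <= g b).
Proof.
move=> Hf; case: (leqP (g a) (g b)) => h; first exact: cnt_mono.
by apply/negbTE; rewrite -ltnNge; apply: cnt_lt h (ltn_ord _) (fib_nz b Hf).
Qed.

Lemma block_card g j : fib g -> j < k ->
  #|Wset (rr g) j.+1 :\: Wset (rr g) j| = nth 0 alpha j.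
Proof.
move=> Hf Hj; have [p /andP[/andP[hp hnz] /eqP hc]] := pos_ex Hj.
have -> : Wset (rr g) j.+1 :\: Wset (rr g) j = [set v | g v == Ordinal hp].
  apply/setP => v; rewrite !inE ltnS -leqNgt andbC -eqn_leq -hc /rr.
  apply/eqP/eqP => [h|-> //]; apply: val_inj => /=.
  exact: (cnt_inj (ltn_ord _) hp (fib_nz v Hf) hnz h).
by rewrite (eqP (forallP Hf (Ordinal hp))) /= -hc nth_filter_cnt.
Qed.

Lemma phi_chain g : fib g -> goodN B (rr g) -> @splitting_chain n B alpha (phi g).
Proof.
move=> Hf Hg; case: HB => _ Hs _.
apply/and3P; split.
- by rewrite nth_phi //; apply/eqP/setP => v; rewrite !inE ltn0.
- by rewrite nth_phi //; apply/eqP/setP => v; rewrite !inE rr_lt.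
- apply/allP => j; rewrite mem_iota add0n => /andP[_ Hj].
  rewrite !nth_phi ?(ltnW Hj) //.
  apply/and3P; split.
  + rewrite properE; apply/andP; split.
      by apply/subsetP => v; rewrite !inE => h; rewrite ltnS ltnW.
    apply/negP => Hsub.
    have := block_card Hf Hj.
    have -> : Wset (rr g) j.+1 :\: Wset (rr g) j = set0 by apply/eqP; rewrite setD_eq0.
    rewrite cards0 => H.
    have : nth 0 alpha j \in alpha := mem_nth 0 Hj.
    by rewrite -H mem_filter eqxx.
  + by rewrite block_card.
  + exact: (proj2 (discrete_good Hs (fun v => rr_lt v Hf)) Hg j Hj).
Qed.

Lemma chain_good g : fib g -> @splitting_chain n B alpha (phi g) -> goodN B (rr g).
Proof.
move=> Hf /and3P[_ _ Hall]; case: HB => _ Hs _.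
apply: (proj1 (discrete_good Hs (fun v => rr_lt v Hf))) => j Hj.
have := allP Hall j; rewrite mem_iota add0n Hj => /(_ isT).
by rewrite !nth_phi ?(ltnW Hj) // => /and3P[_ _].
Qed.

Lemma phi_inj g1 g2 : fib g1 -> fib g2 -> phi g1 = phi g2 -> g1 = g2.
Proof.
move=> F1 F2 He; apply/ffunP => v.
have Hn : forall j, j <= k -> Wset (rr g1) j = Wset (rr g2) j.
  by move=> j hj; rewrite -!nth_phi // He.
have Hr : rr g1 v = rr g2 v.
  apply/eqP; rewrite eqn_leq; apply/andP; split.
    have : v \in Wset (rr g2) (rr g2 v).+1 by rewrite inE.
    by rewrite -Hn ?(rr_lt v F2) // inE ltnS.
  have : v \in Wset (rr g1) (rr g1 v).+1 by rewrite inE.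
  by rewrite Hn ?(rr_lt v F1) // inE ltnS.
apply: val_inj; exact: (cnt_inj (ltn_ord _) (ltn_ord _) (fib_nz v F1) (fib_nz v F2) Hr).
Qed.

Lemma phi_surj (c : k.+1.-tuple {set 'I_n}) :
  @splitting_chain n B alpha c -> exists2 g, fib g & phi g = c.
Proof.
move=> /and3P [H0 Hk Hall].
have Hj : forall j, j < k -> [&& nth set0 c j \proper nth set0 c j.+1,
    #|nth set0 c j.+1 :\: nth set0 c j| == nth 0 alpha j &
    discrete_on (nth set0 c j.+1 :\: nth set0 c j)
      (contract (nth set0 c j.+1) (restrict B (nth set0 c j.+1)) (nth set0 c j))].
  by move=> j hj; apply: (allP Hall); rewrite mem_iota add0n.
have Hsub : forall j, j < k -> nth set0 c j \subset nth set0 c j.+1.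
  by move=> j hj; case/and3P: (Hj j hj) => /proper_sub.
have Hmono := chain_mono Hsub.
have Hex : forall v, exists j, v \in nth set0 c j.+1.
  move=> v; exists k.-1.
  have Hv : v \in nth set0 c k by rewrite (eqP Hk) inE.
  have Hk0 : k != 0.
    apply/eqP => Ek; have E : nth set0 c k = nth set0 c 0 := congr1 (nth set0 c) Ek.
    by rewrite E (eqP H0) inE in Hv.
  by rewrite prednK // lt0n.
pose rho v := ex_minn (Hex v).
have Hrho : forall v j, j <= k -> (v \in nth set0 c j) = (rho v < j).
  move=> v j hj; rewrite /rho; case: ex_minnP => r Hr Hmin.
  apply/idP/idP => [Hv|Hlt].
  - case: j hj Hv => [|j] hj Hv; first by move: Hv; rewrite (eqP H0) inE.
    by rewrite ltnS; apply: Hmin.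
  - exact: (subsetP (Hmono r.+1 j Hlt hj)).
have Hrk : forall v, rho v < k by move=> v; rewrite -Hrho // (eqP Hk) inE.
have Hpos : forall v, exists i, (i < size s) && (nth 0 s i != 0) && (cnt s i == rho v).
  by move=> v; apply: pos_ex.
pose p v := xchoose (Hpos v).
have Hp : forall v, (p v < size s) && (nth 0 s (p v) != 0) && (cnt s (p v) == rho v).
  by move=> v; exact: (xchooseP (Hpos v)).
have Hplt : forall v, p v < size s by move=> v; case/andP: (Hp v) => /andP[].
pose g : {ffun 'I_n -> 'I_(size s)} := [ffun v => Ordinal (Hplt v)].
have Hrr : forall v, rr g v = rho v.
  by move=> v; rewrite /rr ffunE /=; case/andP: (Hp v) => _ /eqP.
have Hgnz : forall v, nth 0 s (g v) != 0.
  by move=> v; rewrite ffunE /=; case/andP: (Hp v) => /andP[].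
have Hfib : fib g.
  apply/forallP => i; apply/eqP.
  case: (boolP (nth 0 s i != 0)) => Hi; last first.
    rewrite (eqP (negbNE Hi)); apply/eqP; rewrite cards_eq0; apply/eqP/setP => v.
    rewrite !inE; apply/negP => /eqP Hv; have := Hgnz v; rewrite Hv.
    by rewrite (eqP (negbNE Hi)).
  have Hjk : cnt s i < k := cnt_ltk (ltn_ord i) Hi.
  have -> : [set v | g v == i] = nth set0 c (cnt s i).+1 :\: nth set0 c (cnt s i).
    apply/setP => v; rewrite !inE (Hrho v _ Hjk) (Hrho v _ (ltnW Hjk)) ltnS -leqNgt andbC -eqn_leq -Hrr.
    apply/eqP/eqP => [Hgi|h]; first by rewrite /rr Hgi.
    apply: val_inj.
    exact: (cnt_inj (ltn_ord _) (ltn_ord _) (Hgnz v) Hi h).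
  by case/and3P: (Hj _ Hjk) => _ /eqP -> _; rewrite nth_filter_cnt.
exists g => //.
apply: val_inj => /=; apply: (@eq_from_nth _ set0); first by rewrite size_mkseq size_tuple.
move=> j; rewrite size_mkseq ltnS => hj; rewrite nth_mkseq ?ltnS //.
by apply/setP => v; rewrite inE Hrr -Hrho.
Qed.
End Count.

Lemma count_main (R : realFieldType) n (B : {set {set 'I_n}}) (s : seq nat) :
  building_set B ->
  #|[set g : {ffun 'I_n -> 'I_(size s)} |
      pbool (generic (nestohedron (R := R) B) (fun v => (g v).+1)) &&
      [forall i : 'I_(size s), #|[set v | g v == i]| == nth 0 s i]]|
  = zeta B [seq e <- s | e != 0].
Proof.
move=> HB; have H0 : set0 \notin B by case: HB.
set A := [set g : {ffun 'I_n -> 'I_(size s)} | _].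
have HA : forall g, g \in A -> fib g /\ goodN B (rr g).
  move=> g; rewrite inE => /andP[/pboolP Hgen Hf]; split => //.
  apply: (good_mono _ (generic_good H0 Hgen)) => a b.
  by rewrite ltnS (rr_mono _ _ Hf).
have HA' : forall g, fib g -> goodN B (rr g) -> g \in A.
  move=> g Hf Hg; rewrite inE; apply/andP; split => //; apply/pboolP.
  apply: (good_generic R H0); apply: (good_mono _ Hg) => a b.
  by rewrite ltnS (rr_mono _ _ Hf).
rewrite /zeta -(card_in_imset (f := @phi n s) (D := mem A)); last first.
  move=> g1 g2 H1 H2; apply: phi_inj; [by case: (HA _ H1)|by case: (HA _ H2)].
apply: eq_card => c; rewrite inE; apply/imsetP/idP.
- by case=> g Hg ->; have [F G] := HA g Hg; apply: phi_chain.
- move=> Hc; have [g F E] := phi_surj Hc; exists g => //.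
  apply: HA' => //; apply: (chain_good HB F); by rewrite E.
Qed.

Lemma fib_sumn n (s : seq nat) (g : {ffun 'I_n -> 'I_(size s)}) : fib g -> sumn s = n.
Proof.
move=> Hf.
have -> : n = \sum_(i < size s) #|[set v | g v == i]|.
  rewrite -{1}(card_ord n) -sum1_card (partition_big g xpredT) //=.
  apply: eq_bigr => i _; rewrite -sum1_card; apply: eq_bigl => v; by rewrite inE.
rewrite sumnE (big_nth 0) big_mkord; apply: eq_bigr => i _.
by rewrite (eqP (forallP Hf i)).
Qed.

Lemma sumn_filter (s : seq nat) : sumn [seq e <- s | e != 0] = sumn s.
Proof. by elim: s => //= e s IH; case: eqP => [->|_] /=; rewrite IH. Qed.

Lemma size_le_sumn (a : seq nat) : all (fun e => 0 < e) a -> size a <= sumn a.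
Proof. by elim: a => //= x a IH /andP[hx ha]; rewrite -add1n leq_add // IH. Qed.

Lemma mem_le_sumn (a : seq nat) x : x \in a -> x <= sumn a.
Proof.
elim: a => //= y a IH; rewrite in_cons => /orP[/eqP ->|h]; first exact: leq_addr.
exact: leq_trans (IH h) (leq_addl _ _).
Qed.

Lemma seqs_upto_mem k xs (a : seq nat) : size a <= k -> all (fun x => x \in xs) a ->
  a \in seqs_upto k xs.
Proof.
elim: k a => [|k IH] [|x a] //= hs /andP[hx ha].
rewrite in_cons /=; apply: (allpairs_f (fun x s => x :: s)) => //.
exact: IH.
Qed.

Lemma comp_mem n (s : seq nat) :
  ([seq e <- s | e != 0] \in compositions n) = (sumn s == n).
Proof.
rewrite mem_undup mem_filter /is_composition sumn_filter.
case: eqP => [Hs|] /=; last by rewrite andbF.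
have Hpos : all (fun e => 0 < e) [seq e <- s | e != 0].
  by apply/allP => e; rewrite mem_filter lt0n => /andP[].
rewrite Hpos /=; apply: seqs_upto_mem.
  by rewrite -Hs -sumn_filter; apply: size_le_sumn.
apply/allP => x hx; rewrite mem_iota.
have := allP Hpos x hx; rewrite add1n ltnS => ->.
by rewrite -Hs -sumn_filter; apply: mem_le_sumn.
Qed.

Theorem mainTheorem2 (R : realFieldType) (n : nat) (B : {set {set 'I_n}}) :
  building_set B -> connected_bs B ->
  Fser (nestohedron (R := R) B) =
  qsum (compositions n) (fun alpha => zeta B alpha) Mqsym.
Proof.
move=> HB _; apply: functional_extensionality => s.
rewrite /Fser /qsum /Mqsym.
case: (boolP (sumn s == n)) => Hs.
  rewrite (bigD1_seq [seq e <- s | e != 0]) /=; last exact: undup_uniq.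
    rewrite eqxx muln1 big1 ?addn0; first exact: count_main.
    by move=> a Ha; rewrite eq_sym (negbTE Ha) muln0.
  by rewrite comp_mem.
rewrite big1_seq.
  apply/eqP; rewrite cards_eq0; apply/eqP/setP => g; rewrite !inE.
  apply/negP => /andP[_ Hf]; move: Hs; by rewrite (fib_sumn Hf) eqxx.
move=> a /andP[_ Ha]; case: eqP => [Heq|_]; last by rewrite muln0.
by move: Ha; rewrite -Heq comp_mem (negbTE Hs).
Qed.
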